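(* Let $T\ge1$, $\alpha>0$, $\Delta\ge0$, and let $\mathcal{M}\subseteq\Delta(\mathcal{Z})$ with loss $L:\mathcal{M}\times\Pi\to\mathbb{R}$. Suppose $\mathsf{Alg}:\mathcal{Z}^T\to\Delta(\Pi)$ is $\alpha$-JDP and for every $M\in\mathcal{M}$, when the data $z_1,\dots,z_T$ are i.i.d. from $M$ and $\pi_{T+1}\sim\mathsf{Alg}(z_1,\dots,z_T)$, we have $\mathbb{P}(L(M,\pi_{T+1})\le\Delta)\ge\tfrac12$. Then $$T\ \ge\ \frac{\log N_{\mathsf{frac}}(\mathcal{M};\Delta)-\log2}{\alpha}.$$
   Context: Two datasets in $\mathcal{Z}^T$ are neighboring if they differ in at most one coordinate. An algorithm $\mathsf{Alg}:\mathcal{Z}^T\to\Delta(\Pi)$ is $\alpha$-JDP if for all neighboring datasets $\mathcal{H},\mathcal{H}'$ and all measurable $E\subseteq\Pi$, $\mathsf{Alg}(\mathcal{H})(E)\le e^\alpha\mathsf{Alg}(\mathcal{H}')(E)$. Fractional covering number: $N_{\mathsf{frac}}(\mathcal{M};\Delta)=\inf_{p\in\Delta(\Pi)}\sup_{M\in\mathcal{M}}\frac1{p(\{\pi:L(M,\pi)\le\Delta\})}$. *)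

(* Defs.v *)
From HB Require Import structures.
From mathcomp Require Import all_boot all_order all_algebra.
From mathcomp Require Import all_classical all_reals all_analysis.
Set Implicit Arguments. Unset Strict Implicit. Unset Printing Implicit Defensive.
Import Order.TTheory GRing.Theory Num.Theory.
Local Open Scope classical_set_scope.
Local Open Scope ring_scope.

Definition neighboring (Z : Type) (T : nat) (H H' : T.-tuple Z) : Prop :=
  exists i : 'I_T, forall j : 'I_T, j != i -> tnth H j = tnth H' j.

Definition JDP d d' (Z : measurableType d) (Pi : measurableType d')
    (R : realType) (T : nat) (alpha : R)
    (Alg : T.-tuple Z -> {measure set Pi -> \bar R}) : Prop :=
  forall H H' : T.-tuple Z, neighboring H H' ->
  forall E : set Pi, measurable E ->
    (Alg H E <= (expR alpha)%:E * Alg H' E)%E.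

(* Integral of a nonnegative function f : Z^n -> \bar R against the product
   measure M^{(x) n} (i.i.d. draws z_1,...,z_n ~ M), written as the
   iterated (Tonelli) integral. *)
Fixpoint iid_integral d (Z : measurableType d) (R : realType)
    (M : {measure set Z -> \bar R}) (n : nat) : (n.-tuple Z -> \bar R) -> \bar R :=
  match n with
  | 0 => fun f => f [tuple]
  | n'.+1 => fun f =>
      (\int[M]_z iid_integral M (fun t : n'.-tuple Z => f [tuple of z :: t]))%E
  end.

Definition success_prob d d' (Z : measurableType d) (Pi : measurableType d')
    (R : realType) (T : nat)
    (Alg : T.-tuple Z -> {measure set Pi -> \bar R})
    (M : probability Z R) (LM : Pi -> R) (Delta : R) : \bar R :=
  iid_integral M (fun H => Alg H [set pi | (LM pi <= Delta)%R]).

(* Fractional covering number: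
   inf_{p in Delta(Pi)} sup_{M in Mset} 1 / p({pi : L(M,pi) <= Delta})
   (with 1/0 = +oo), valued in the extended reals. *)
Definition Nfrac d d' (Z : measurableType d) (Pi : measurableType d')
    (R : realType) (Mset : set (probability Z R))
    (L : probability Z R -> Pi -> R) (Delta : R) : \bar R :=
  ereal_inf [set ereal_sup [set ((p [set pi | (L M pi <= Delta)%R])^-1)%E | M in Mset]
            | p in [set: probability Pi R]].

(* Main.v *)
Require Import Defs.
From HB Require Import structures.
From mathcomp Require Import all_boot all_order all_algebra.
From mathcomp Require Import all_classical all_reals all_analysis.
From mathcomp Require Import lra.
Import Order.TTheory GRing.Theory Num.Theory.
Local Open Scope classical_set_scope.
Local Open Scope ring_scope.

Section PK.
Context dX dY (X : measurableType dX) (Y : measurableType dY) (R : realType)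
  (k : R.-pker X ~> Y) (x : X).
Definition pkapp : set Y -> \bar R := k x.
HB.instance Definition _ := Measure.on pkapp.
HB.instance Definition _ :=
  Measure_isProbability.Build _ _ _ pkapp (prob_kernel (s:=k) x).
End PK.

Lemma int_mono d (T : measurableType d) (R : realType)
  (mu : {measure set T -> \bar R}) (f g : T -> \bar R) :
  (forall x, (0 <= f x)%E) -> (forall x, (f x <= g x)%E) ->
  (\int[mu]_x f x <= \int[mu]_x g x)%E.
Proof.
move=> f0 fg.
have g0 : forall x, (0 <= g x)%E by move=> x; exact: le_trans (f0 x) (fg x).
rewrite (ge0_integralTE mu f0) (ge0_integralTE mu g0).
apply: ereal_sup_le => _ [h hf <-]; exists h => //= x.
exact: le_trans (hf x) (fg x).
Qed.

Lemma iid_ge0 d (Z : measurableType d) (R : realType)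
  (M : {measure set Z -> \bar R}) n (f : n.-tuple Z -> \bar R) :
  (forall H, (0 <= f H)%E) -> (0 <= iid_integral M f)%E.
Proof.
elim: n f => [|n IH] f f0 /=; first exact: f0.
by apply: integral_ge0 => z _; apply: IH => t; exact: f0.
Qed.

Lemma iid_le d (Z : measurableType d) (R : realType)
  (M : probability Z R) n (f : n.-tuple Z -> \bar R) (c : R) :
  0 <= c -> (forall H, (0 <= f H)%E) -> (forall H, (f H <= c%:E)%E) ->
  (iid_integral M f <= c%:E)%E.
Proof.
elim: n f => [|n IH] f c0 f0 fc /=; first exact: fc.
have hm := @int_mono _ _ _ M
  (fun z => iid_integral M (fun t : n.-tuple Z => f [tuple of z :: t])) (cst c%:E).
have h1 : forall z, (0 <= iid_integral M (fun t : n.-tuple Z => f [tuple of z :: t]))%E.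
  by move=> z; apply: iid_ge0 => t; exact: f0.
have h2 : forall z, (iid_integral M (fun t : n.-tuple Z => f [tuple of z :: t]) <= c%:E)%E.
  by move=> z; apply: (IH _ c0) => t; [exact: f0|exact: fc].
apply: le_trans (hm h1 h2) _.
rewrite (integral_cst M measurableT).
apply: (@le_trans _ _ (c%:E * 1)%E); last by rewrite mule1.
apply: lee_pmul => //.
exact: (probability_le1 M measurableT).
Qed.

Lemma jdp_chain d d' (Z : measurableType d) (Pi : measurableType d')
  (R : realType) T (alpha : R) (Alg : T.-tuple Z -> {measure set Pi -> \bar R}) :
  JDP alpha Alg -> forall H H' E, measurable E ->
  (Alg H E <= (expR (alpha * T%:R))%:E * Alg H' E)%E.
Proof.
move=> hj H H' E mE.
pose mix k := [tuple (if (i < k)%N then tnth H' i else tnth H i) | i < T].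
have mix0 : mix 0%N = H by apply: eq_from_tnth => i; rewrite tnth_mktuple.
have mixT : mix T = H' by apply: eq_from_tnth => i; rewrite tnth_mktuple ltn_ord.
suff: forall k, (k <= T)%N ->
    (Alg H E <= (expR (alpha * k%:R))%:E * Alg (mix k) E)%E.
  by move/(_ T (leqnn T)); rewrite mixT.
elim=> [_|k IH kT].
  by rewrite mulr0 expR0 mul1e mix0.
have hn : neighboring (mix k) (mix k.+1).
  exists (Ordinal kT) => j /= hj'; rewrite !tnth_mktuple [(j < k.+1)%N]ltnS [(j <= k)%N]leq_eqVlt.
  have -> : (nat_of_ord j == k) = false.
    apply/negbTE; apply: contra hj' => /eqP hjk; apply/eqP/val_inj.
    by rewrite /= hjk.
  by [].
apply: le_trans (IH (ltnW kT)) _.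
rewrite -addn1 natrD mulrDr mulr1 expRD EFinM -muleA.
apply: lee_pmul.
- by rewrite lee_fin expR_ge0.
- exact: measure_ge0.
- exact: lexx.
- by rewrite addn1; exact: hj.
Qed.

Theorem proposition6p5 (d d' : measure_display)
    (Z : measurableType d) (Pi : measurableType d') (R : realType)
    (T : nat) (alpha Delta : R)
    (Mset : set (probability Z R)) (L : probability Z R -> Pi -> R)
    (Alg : R.-pker (T.-tuple Z) ~> Pi) :
  (1 <= T)%N -> 0 < alpha -> 0 <= Delta ->
  (forall M, Mset M -> measurable_fun [set: Pi] (L M)) ->
  JDP alpha Alg ->
  (forall M, Mset M -> ((1/2)%:E <= success_prob Alg M (L M) Delta)%E) ->
  (Nfrac Mset L Delta < +oo)%E /\
  (ln (fine (Nfrac Mset L Delta)) - ln 2) / alpha <= T%:R.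
Proof.
move=> T1 a0 D0 Lm jdp hs.
pose H0 : T.-tuple Z := [tuple (point : Z) | _ < T].
pose p : probability Pi R := @pkapp _ _ _ _ _ Alg H0.
pose K := expR (alpha * T%:R).
have Kp : 0 < K by exact: expR_gt0.
have key : forall M, Mset M ->
    ((p [set pi | (L M pi <= Delta)%R])^-1 <= (2 * K)%:E)%E.
  move=> M MM; set E := [set pi | L M pi <= Delta].
  have mE : measurable E.
    have := measurable_fun_le measurableT (Lm M MM) (measurable_cst Delta).
    by rewrite setTI.
  have pE1 : (p E <= 1)%E := probability_le1 p mE.
  have pEfin : p E = (fine (p E))%:E.
    rewrite fineK // ge0_fin_numE ?measure_ge0 //.
    exact: le_lt_trans pE1 (ltry _).
  set r := fine (p E).
  have h1 := hs M MM; rewrite /success_prob in h1.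
  have h2 : (iid_integral M (fun H => Alg H E) <= (K * r)%:E)%E.
    apply: iid_le.
    - by rewrite mulr_ge0 ?(ltW Kp) // fine_ge0 // measure_ge0.
    - by move=> H; exact: measure_ge0.
    - move=> H; rewrite EFinM.
      have -> : r%:E = Alg H0 E by rewrite -pEfin.
      exact: jdp_chain.
  have h3 : 1/2 <= K * r by rewrite -lee_fin; exact: le_trans h1 h2.
  have rp : 0 < r.
    rewrite lt_def fine_ge0 ?measure_ge0 // andbT; apply/eqP => r0.
    by move: h3; rewrite r0 mulr0; lra.
  rewrite pEfin -/r inver gt_eqF // lee_fin.
  rewrite -(ler_pM2r rp) mulVf ?gt_eqF //.
  by rewrite -mulrA; lra.
have Nle : (Nfrac Mset L Delta <= (2 * K)%:E)%E.
  rewrite /Nfrac; apply: le_trans.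
    by apply: ereal_inf_lbound; exists p.
  by apply: ge_ereal_sup => _ [M MM <-]; exact: key.
split; first exact: le_lt_trans Nle (ltry _).
have fN : fine (Nfrac Mset L Delta) <= 2 * K.
  move: Nle; case: (Nfrac Mset L Delta) => [r| |] /=.
  - by rewrite lee_fin.
  - by rewrite leye_eq.
  - by move=> _; rewrite mulr_ge0 // ltW.
have l2 : 0 < ln (2 : R) by apply: ln_gt0; rewrite ltr1n.
have aT : 0 <= alpha * T%:R by rewrite mulr_ge0 // ltW.
have hl : ln (fine (Nfrac Mset L Delta)) <= ln 2 + alpha * T%:R.
  case: (leP (fine (Nfrac Mset L Delta)) 0) => h.
    by rewrite ln0 // addr_ge0 // ltW.
  apply: le_trans (_ : ln (2 * K) <= _).
    by rewrite ler_ln ?posrE // mulr_gt0.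
  by rewrite lnM ?posrE // /K expRK.
by rewrite ler_pdivrMr // lerBlDl (mulrC T%:R).
Qed.
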